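(* Let $k\geq2$, $n$, $r$ be positive integers with $r<\frac{(k-1)n}{k}$, and let $\mathcal{F}\subseteq\binom{[n]}{r}$ be $k$-wise intersecting. Let $\sigma$ be a permutation of $[n]$ (viewed as a cyclic order) such that $|\mathcal{F}_\sigma|=r$ and every member of $\mathcal{F}_\sigma$ contains $\sigma(v)$, for some position $v\in[n]$. Let $i\in[n]\setminus\{v,v-1\}$ (where $v-1=n$ if $v=1$), and let $\mu$ be obtained from $\sigma$ by swapping the entries in positions $i$ and $i+1$ (where $i+1=1$ if $i=n$). If $|\mathcal{F}_\mu|=r$, then every member of $\mathcal{F}_\mu$ contains $\sigma(v)$.
   Context: $\binom{[n]}{r}$ is the family of $r$-subsets of $[n]$. A family is $k$-wise intersecting if any $k$ of its members have nonempty common intersection. For a permutation $\sigma$ of $[n]$, a $\sigma$-interval of length $r$ is a set $\{\sigma(x),\sigma(x+1),\dots,\sigma(x+r-1)\}$ for some $x\in[n]$, indices modulo $n$; $\mathcal{F}_\sigma$ denotes the set of members of $\mathcal{F}$ that are $\sigma$-intervals. (The paper calls $\sigma$ saturated if $|\mathcal{F}_\sigma|=r$, and $v$-saturated if moreover all members of $\mathcal{F}_\sigma$ contain the common point at position $v$.) *)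

(* Defs.v *)
From mathcomp Require Import all_boot all_fingroup.
Set Implicit Arguments. Unset Strict Implicit. Unset Printing Implicit Defensive.

(* Ground set [n] is modelled by 'I_n = {0,...,n-1}; positions are also 'I_n.
   A permutation sigma : {perm 'I_n} maps positions to elements. *)

(* The sigma-interval of length r starting at position x:
   { sigma(x), sigma(x+1), ..., sigma(x+r-1) }, positions modulo n. *)
Definition interval (n : nat) (s : {perm 'I_n}) (r : nat) (x : 'I_n) : {set 'I_n} :=
  [set s y | y : 'I_n & ((y + n - x) %% n < r)%N].

Definition Fsig (n r : nat) (F : {set {set 'I_n}}) (s : {perm 'I_n}) : {set {set 'I_n}} :=
  [set A in F | [exists x : 'I_n, A == interval s r x]].

Definition uniform (n r : nat) (F : {set {set 'I_n}}) : Prop :=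
  forall A, A \in F -> #|A| = r.

(* k-wise intersecting: any k members (not necessarily distinct) F_1..F_k of F
   have nonempty common intersection. *)
Definition kwise_intersecting (n k : nat) (F : {set {set 'I_n}}) : Prop :=
  forall f : 'I_k -> {set 'I_n}, (forall j, f j \in F) ->
    \bigcap_(j < k) f j != set0.

(* Main.v *)
Require Import Defs.
From mathcomp Require Import all_boot all_fingroup.
From mathcomp Require Import zify.

Definition md (n x y : nat) : nat := ((x + n - y) %% n)%N.

Lemma mdP n x y : (x < n)%N -> (y < n)%N ->
  ((y <= x)%N /\ md n x y = (x - y)%N) \/ ((x < y)%N /\ md n x y = (x + n - y)%N).
Proof.
rewrite /md => xn yn; case: (leqP y x) => h.
  left; split => //.
  have -> : (x + n - y = (x - y) + n)%N by lia.
  rewrite modnDr modn_small //; lia.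
right; split => //; rewrite modn_small //; lia.
Qed.

Arguments mdP {n x y}.

Lemma md_shift n x y v : (x < n)%N -> (y < n)%N -> (v < n)%N ->
  md n x y = md n (md n x v) (md n y v).
Proof.
move=> xn yn vn.
have h1 := mdP xn vn; have h2 := mdP yn vn; have h3 := mdP xn yn.
have l1 : (md n x v < n)%N by case: h1; lia.
have l2 : (md n y v < n)%N by case: h2; lia.
have h4 := mdP l1 l2.
case: h1 => [[? ?]|[? ?]]; case: h2 => [[? ?]|[? ?]]; lia.
Qed.
Lemma md_inj n x y v : (x < n)%N -> (y < n)%N -> (v < n)%N ->
  md n x v = md n y v -> x = y.
Proof.
move=> xn yn vn; have h1 := mdP xn vn; have h2 := mdP yn vn; lia.
Qed.

Lemma md_lt n x y : (0 < n)%N -> (md n x y < n)%N.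
Proof. by move=> n0; rewrite /md ltn_pmod. Qed.
Arguments md_lt {n} x y.

Lemma mem_interval n (s : {perm 'I_n}) r x p :
  (s p \in interval s r x) = (md n p x < r)%N.
Proof. by rewrite /interval mem_imset ?inE //; apply: perm_inj. Qed.

Lemma valS n (i : 'I_n) : ((i.+1 < n)%N /\ nat_of_ord (ordS i) = i.+1) \/ (i.+1 = n /\ nat_of_ord (ordS i) = 0%N).
Proof.
rewrite /=.
case: (ltnP i.+1 n) => h.
  by left; split => //; rewrite modn_small.
right; have e : i.+1 = n by have := ltn_ord i; lia.
by split => //; rewrite e modnn.
Qed.

Theorem lemma2p3 (k n r : nat) (F : {set {set 'I_n}})
  (sigma mu : {perm 'I_n}) (v i : 'I_n) :
  (2 <= k)%N -> (0 < n)%N -> (0 < r)%N ->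
  (r * k < (k - 1) * n)%N ->
  uniform r F ->
  kwise_intersecting k F ->
  #|Fsig r F sigma| = r ->
  (forall A, A \in Fsig r F sigma -> sigma v \in A) ->
  i != v -> i != ord_pred v ->
  (forall x, mu x = sigma (tperm i (ordS i) x)) ->
  #|Fsig r F mu| = r ->
  forall A, A \in Fsig r F mu -> sigma v \in A.
Proof.
move=> k2 n0 r0 hrk unif kw cardS allv iv ipv hmu cardM A AM.
have rn : (r < n)%N by nia.
have hw : (r < (k - 1) * (n - r))%N by rewrite mulnBr; nia.
pose xt (t : nat) : 'I_n := Ordinal (ltn_pmod (v + n - t) n0).
have xtE t : val (xt t) = md n v t by [].
have inF : forall t, (t < r)%N -> interval sigma r (xt t) \in F.
  have sub : Fsig r F sigma \subset [set interval sigma r (xt (val t)) | t : 'I_r].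
    apply/subsetP => B; rewrite inE => /andP [BF /existsP [x /eqP Bx]].
    have : sigma v \in B.
      by apply: allv; rewrite inE BF; apply/existsP; exists x; rewrite Bx.
    rewrite Bx mem_interval => hlt.
    apply/imsetP; exists (Ordinal hlt) => //.
    congr interval; apply: val_inj; rewrite xtE /=.
    have := mdP (ltn_ord v) (ltn_ord x).
    have := mdP (ltn_ord v) (ltn_trans hlt rn).
    have := ltn_ord x; have := ltn_ord v; lia.
  have : Fsig r F sigma == [set interval sigma r (xt (val t)) | t : 'I_r].
    rewrite eqEcard sub cardS /=.
    by apply: leq_trans (leq_imset_card _ _) _; rewrite card_ord.
  move/eqP => E t tr.
  have : interval sigma r (xt t) \in Fsig r F sigma.
    by rewrite E; apply/imsetP; exists (Ordinal tr).
  by rewrite inE => /andP [].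
move: AM; rewrite inE => /andP [AF /existsP [y /eqP Ay]].
have Siv : ordS i != v.
  apply/eqP => e; move/eqP: ipv; apply; by rewrite -e ordSK.
have tv : tperm i (ordS i) v = v by rewrite tpermD // eq_sym.
case: (boolP (sigma v \in A)) => // nvA; exfalso.
have nvy : ~~ (md n v y < r)%N.
  by move: nvA; rewrite Ay -{1}tv -hmu mem_interval.
have iv' : nat_of_ord i <> nat_of_ord v by move=> e; move/eqP: iv; apply; apply: val_inj.
have Siv' : nat_of_ord (ordS i) <> nat_of_ord v by move=> e; move/eqP: Siv; apply; apply: val_inj.
have hS := @valS n i.
have bi := ltn_ord i; have bv := ltn_ord v; have by_ := ltn_ord y.
have m1 := mdP bi bv; have m2 := mdP by_ bv; have m3 := mdP bv by_.
have m4 := mdP (ltn_ord (ordS i)) bv.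
have Dyb : (1 <= md n y v)%N /\ (md n y v + r <= n)%N.
  rewrite -leqNgt in nvy; lia.
have Dib : (1 <= md n i v)%N /\ ((md n i v).+1 < n)%N /\ md n (ordS i) v = (md n i v).+1.
  lia.
clear m1 m2 m3 m4 hS.
pose Dy := md n y v. pose Di := md n i v.
pose a := if Di.+1 == Dy then Dy.-1 else Dy.
have aE : (Di.+1 = Dy /\ a = Dy.-1) \/ (Di.+1 <> Dy /\ a = Dy).
  by rewrite /a; case: eqP; [left|right].
move: aE; rewrite /Dy /Di => aE.
clearbody a.
have a1 : (1 <= a)%N by lia.
pose w := (n - r)%N.
have wE : w = (n - r)%N by [].
clearbody w.
pose tj (j : nat) := (r - a - j * w)%N.
pose f (j : 'I_k) := if (val j < k.-1)%N then interval sigma r (xt (tj j)) else A.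
have fF : forall j, f j \in F.
  move=> j; rewrite /f; case: ifP => _; last by [].
  apply: inF; rewrite /tj; lia.
have := kw f fF; case/set0Pn => e /bigcapP he.
have [p ep] : exists p, e = sigma p by exists ((sigma^-1)%g e); rewrite permKV.
subst e.
have kk : (k.-1 < k)%N by lia.
have := he (Ordinal kk) isT; rewrite /f /= ltnn Ay.
have -> : sigma p = mu (tperm i (ordS i) p) by rewrite hmu tpermK.
rewrite mem_interval => hq0.
have bp := ltn_ord p.
have Dpb : (a <= md n p v <= a + r)%N /\ (1 <= md n p v)%N.
  move: hq0; case: (tpermP i (ordS i) p) => [pi|pSi|npi npSi] hq;
    rewrite (@md_shift n _ _ v) ?ltn_ord // in hq.
  - subst p. rewrite (proj2 (proj2 Dib)) in hq. have m6 := mdP (proj1 (proj2 Dib)) (md_lt y v n0). lia.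
  - subst p. rewrite (proj2 (proj2 Dib)). have m6 := mdP (md_lt i v n0) (md_lt y v n0). lia.
  - have npi' : md n p v <> md n i v by move=> e; apply: npi; apply: val_inj; apply: (@md_inj n _ _ v (ltn_ord _) (ltn_ord _) bv e).
    have npSi' : md n p v <> (md n i v).+1.
      rewrite -(proj2 (proj2 Dib)) => e; apply: npSi; apply: val_inj; apply: (@md_inj n _ _ v (ltn_ord _) (ltn_ord _) bv e).
    have m6 := mdP (md_lt p v n0) (md_lt y v n0). lia.
clear aE.
have m5 := mdP bp bv.
clear hq0.
have w0 : (0 < w)%N by lia.
pose j := ((md n p v - a) %/ w)%N.
have [jw1 jw2] : (j * w <= md n p v - a /\ md n p v - a < j * w + w)%N.
  have := divn_eq (md n p v - a) w; have := ltn_pmod (md n p v - a) w0.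
  rewrite -/j; move: (j * w) ((md n p v - a) %% w) => jw rm; lia.
have jk : (j < k.-1)%N.
  rewrite -(ltn_pmul2r w0); have -> : k.-1 = (k - 1)%N by lia.
  rewrite -wE in hw; apply: (leq_ltn_trans jw1); apply: (leq_ltn_trans _ hw).
  by rewrite leq_subLR; case/andP: (proj1 Dpb).
have jk' : (j < k)%N by lia.
have := he (Ordinal jk') isT; rewrite /f /= jk mem_interval xtE.
have tn : (tj j < n)%N by rewrite /tj; lia.
have m7 := mdP bv tn.
have m8 := mdP bp (md_lt v (tj j) n0).
rewrite /tj in m7 m8 *.
move=> H; move: H jw1 jw2 m7 m8; move: (j * w) => jw.
clear - m5 Dpb a1 bp bv wE rn n0.
move=> H jw1 jw2 m7 m8.
have := md_lt p v n0.
lia.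
Qed.
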